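(* The variety of Boolean algebras (equivalently, classical propositional logic, with formulas identified up to logical equivalence) has unitary e-generalization type.
   Context: For a variety $\mathsf V$: a symbolic e-generalization problem is a finite multiset $\{t_1,\dots,t_m\}$ of terms (elements of a free algebra $\mathbf F_{\mathsf V}(X)$, $X$ finite, i.e. terms up to the equational theory of $\mathsf V$); a solution is a term $s\in\mathbf F_{\mathsf V}(Y)$ ($Y$ the variables of $s$) such that there are substitutions (homomorphisms between free algebras) $\sigma_k$ with $\sigma_k(s)=t_k$ for all $k$; $s\preceq u$ iff $\sigma(u)=s$ for some substitution $\sigma$. A problem has unitary type if its poset of solutions modulo $\preceq$-equivalence has a minimal complete set (pairwise incomparable elements such that every solution lies above one of them) of cardinality 1, i.e. a least general solution exists. A variety has unitary e-generalization type if every such problem has unitary type. For a logic, e-generalization is taken with respect to logical equivalence of formulas, which for classical logic is the equational theory of Boolean algebras. *)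

(* Defs.v *)
From mathcomp Require Import all_boot.
Set Implicit Arguments. Unset Strict Implicit. Unset Printing Implicit Defensive.

Inductive form (n : nat) : Type :=
  | FVar of 'I_n
  | FTop
  | FBot
  | FNeg of form n
  | FAnd of form n & form n
  | FOr of form n & form n.

Arguments FTop {n}. Arguments FBot {n}.

Fixpoint feval n (v : 'I_n -> bool) (f : form n) : bool :=
  match f with
  | FVar i => v i
  | FTop => true
  | FBot => false
  | FNeg g => ~~ feval v g
  | FAnd g h => feval v g && feval v h
  | FOr g h => feval v g || feval v h
  end.

(* Logical equivalence = equality in the free Boolean algebra F(I_n). *)
Definition fequiv n (f g : form n) : Prop := forall v : 'I_n -> bool, feval v f = feval v g.

(* Substitution: the homomorphism F(I_m) -> F(I_n) determined by the images of
   the variables. *)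
Fixpoint fsubst m n (sigma : 'I_m -> form n) (f : form m) : form n :=
  match f with
  | FVar i => sigma i
  | FTop => FTop
  | FBot => FBot
  | FNeg g => FNeg (fsubst sigma g)
  | FAnd g h => FAnd (fsubst sigma g) (fsubst sigma h)
  | FOr g h => FOr (fsubst sigma g) (fsubst sigma h)
  end.

(* s is a solution of the symbolic e-generalization problem ts (a finite
   multiset of terms over I_n, given as a list): every t_k is an instance of s. *)
Definition egen_solution n (ts : seq (form n)) m (s : form m) : Prop :=
  forall k, (k < size ts)%N -> exists sigma : 'I_m -> form n, fequiv (fsubst sigma s) (nth FBot ts k).

Definition less_general m (s : form m) m' (u : form m') : Prop :=
  exists sigma : 'I_m' -> form m, fequiv (fsubst sigma u) s.

(* Unitary type: there is a minimal complete set of solutions of cardinality 1,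
   i.e. a solution s lying below every solution. *)
Definition unitary_problem n (ts : seq (form n)) : Prop :=
  exists m (s : form m), egen_solution ts s /\
    forall m' (u : form m'), egen_solution ts u -> less_general s u.

(* Main.v *)
Require Import Defs.
From mathcomp Require Import all_boot.
From Stdlib Require Import IndefiniteDescription.
Set Implicit Arguments. Unset Strict Implicit.

Definition ite n (f g h : form n) : form n := FOr (FAnd f g) (FAnd (FNeg f) h).

Fixpoint bld N (sel : nat -> form N) (j : nat) (l : seq (form N)) : form N :=
  match l with
  | [::] => FBot
  | f :: l' => if l' is [::] then f else ite (sel j) f (bld sel j.+1 l')
  end.

Lemma evalA m n (sigma : 'I_m -> form n) (f : form m) v :
  feval v (fsubst sigma f) = feval (fun i => feval v (sigma i)) f.
Proof. by elim: f => //= [g -> | g -> h -> | g -> h ->]. Qed.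

Lemma eval_ext n (v1 v2 : 'I_n -> bool) f :
  (forall i, v1 i = v2 i) -> feval v1 f = feval v2 f.
Proof. by move=> H; elim: f => //= [g -> | g -> h -> | g -> h ->]. Qed.

Lemma bldC N (sel : nat -> form N) w l : forall j k, k < size l ->
  (forall i, i < size l -> feval w (sel (j + i)) = (i == k)) ->
  feval w (bld sel j l) = feval w (nth FBot l k).
Proof.
elim: l => [//|f l IH] j k /= Hk Hs.
case: l IH Hk Hs => [|g l] IH Hk Hs; first by case: k Hk Hs.
have Hj := Hs 0 isT; rewrite addn0 in Hj.
case: k Hk Hs Hj => [|k] Hk Hs Hj /=; rewrite Hj /=.
  by rewrite orbF.
rewrite (IH j.+1 k) //= => i Hi.
by rewrite addSnnS (Hs i.+1).
Qed.

Lemma bldE N (sel : nat -> form N) w K : forall j, 0 < K ->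
  exists k, k < K /\ forall l, size l = K -> feval w (bld sel j l) = feval w (nth FBot l k).
Proof.
elim: K => [//|K IH] j _.
case: K IH => [|K] IH.
  by exists 0; split=> // -[|f [|g l]] //.
case Hj: (feval w (sel j)).
  exists 0; split=> // -[|f [|g l]] //= _.
  by rewrite Hj /= orbF.
have [k [Hk Hl]] := IH j.+1 isT.
exists k.+1; split=> // -[|f [|g l]] //= [Hsz].
rewrite Hj /=; rewrite -(Hl (g :: l)) /= ?Hsz //.
Qed.

Theorem theorem5p1 :
  forall (n : nat) (ts : seq (form n)), ts <> [::] -> unitary_problem ts.
Proof.
move=> n ts Hne.
set K := size ts.
have K0 : 0 < K by rewrite /K; case: (ts) Hne.
pose sel (j : nat) : form (n + K) :=
  match (insub j : option 'I_K) with Some o => FVar (rshift n o) | None => FBot end.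
pose emb (t : form n) : form (n + K) := fsubst (fun i => FVar (lshift K i)) t.
have embE : forall w t, feval w (emb t) = feval (fun i => w (lshift K i)) t.
  by move=> w t; rewrite evalA.
exists (n + K), (bld sel 0 (map emb ts)); split.
  move=> k Hk.
  pose sig (i : 'I_(n + K)) : form n :=
    match split i with inl a => FVar a | inr b => if val b == k then FTop else FBot end.
  exists sig => v; rewrite evalA (bldC (k := k)) ?size_map //.
    rewrite (nth_map FBot) // embE; apply: eval_ext => i.
    by rewrite /sig (unsplitK (inl _ i)).
  move=> i Hi; rewrite add0n /sel insubT /=.
  by rewrite /sig (unsplitK (inr _ (Ordinal Hi))) /=; case: (i == k).
move=> m' u Hu.
have H' : forall k, exists sigma : 'I_m' -> form n,
    k < K -> fequiv (fsubst sigma u) (nth FBot ts k).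
  move=> k; case Hk: (k < K).
    by have [s Hs] := Hu k Hk; exists s.
  by exists (fun _ => FBot).
pose Sig k := proj1_sig (constructive_indefinite_description _ (H' k)).
have SigP : forall k, k < K -> fequiv (fsubst (Sig k) u) (nth FBot ts k).
  by move=> k; rewrite /Sig; case: constructive_indefinite_description.
exists (fun y => bld sel 0 (map (fun k => emb (Sig k y)) (iota 0 K))) => w.
rewrite evalA.
have [k [Hk Hl]] := bldE sel w 0 K0.
rewrite Hl ?size_map // (nth_map FBot) // embE -SigP // evalA.
apply: eval_ext => y.
by rewrite Hl ?size_map ?size_iota // (nth_map 0) ?size_iota // nth_iota // embE.
Qed.
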